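(* For every $k\ge1$ and $l\in\{1,\dots,k+1\}$, the maps $\widetilde{i(\alpha)}:\mathrm{gr}_{k,l}\to\mathrm{gr}_{k-1,l-1}$, $[u]\mapsto[i(\alpha)u]$, and $\widetilde X:\mathrm{gr}_{k-1,l-1}\to\mathrm{gr}_{k,l}$, $[u]\mapsto[Xu]$, are well defined and satisfy \[\widetilde X\circ\widetilde{i(\alpha)}\big|_{\mathrm{gr}_{k,l}}=r(l-1,k-l+1)\,\mathrm{Id},\qquad \widetilde{i(\alpha)}\circ\widetilde X\big|_{\mathrm{gr}_{k-1,l-1}}=r(l-1,k-l+1)\,\mathrm{Id}.\] In particular, if $r(l-1,k-l+1)\neq0$, then $\widetilde{i(\alpha)}:\mathrm{gr}_{k,l}\to\mathrm{gr}_{k-1,l-1}$ is invertible with inverse $\frac{1}{r(l-1,k-l+1)}\widetilde X$.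
   Context: Let $n\ge1$, $M=\mathbb{R}^{2n+1}$ with coordinates $(q^1,\dots,q^n,p^1,\dots,p^n,t)$. For $\mu\in\mathbb{R}$, $\mathcal{S}^k_\mu$ denotes the space of smooth functions $S(x,\xi)$ on $M\times\mathbb{R}^{2n+1}$ homogeneous polynomial of degree $k$ in $\xi=(\xi_{q^1},\dots,\xi_{q^n},\xi_{p^1},\dots,\xi_{p^n},\xi_t)$. Fix $\delta\in\mathbb{R}$ and set $R^k=\mathcal{S}^k_{\delta+\frac{k}{n+1}}$ for $k\ge0$, $R^{j}=0$ for $j<0$. Let $E_s=\sum_i(p^i\partial_{p^i}+q^i\partial_{q^i})$, $\langle E_s,\xi\rangle=\sum_i(p^i\xi_{p^i}+q^i\xi_{q^i})$, $D(S)=\sum_i(\xi_{q^i}\partial_{p^i}S-\xi_{p^i}\partial_{q^i}S)+\xi_tE_s(S)-\langle E_s,\xi\rangle\partial_tS$. Operators: $i(\alpha):R^k\to R^{k-1}$, $i(\alpha)(S)=\frac12\big(\sum_i(p^i\partial_{\xi_{q^i}}S-q^i\partial_{\xi_{p^i}}S)-\partial_{\xi_t}S\big)$; $X:R^k\to R^{k+1}$, $X(S)=D(S)+(2(n+1)\delta+k)\xi_tS$. Set $r(l,k)=-\frac{l}{2}\big(2(n+1)\delta+2k+l-1\big)$. For $k\ge0,l\ge0$, $\mathcal{F}_{k,l}=R^k\cap\ker\big(i(\alpha)^l\big)$; for $l\ge1$, $\mathrm{gr}_{k,l}=\mathcal{F}_{k,l}/\mathcal{F}_{k,l-1}$, and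 $\mathrm{gr}_{k,0}=\{0\}$. *)

(* Defs.v *)
From HB Require Import structures.
From mathcomp Require Import all_boot all_order all_algebra.
From mathcomp Require Import all_classical all_reals all_analysis.
Set Implicit Arguments. Unset Strict Implicit. Unset Printing Implicit Defensive.
Import Order.TTheory GRing.Theory Num.Theory.
Import numFieldNormedType.Exports.
Local Open Scope ring_scope.

(* Coordinates on M = R^(2n+1): index q^i = i, p^i = n + i, t = 2n,
   as elements of 'I_(n + n + 1).  The same indexing is used for xi. *)
Definition qI (n : nat) (i : 'I_n) : 'I_(n + n + 1) := lshift 1 (lshift n i).
Definition pI (n : nat) (i : 'I_n) : 'I_(n + n + 1) := lshift 1 (rshift n i).
Definition tI (n : nat) : 'I_(n + n + 1) := rshift (n + n) (ord0 : 'I_1).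

Section Defs.
Variable R : realType.
Variable n : nat.
Local Notation N := (n + n + 1)%N.
Local Notation pt := 'rV[R]_N.

Definition symbol := pt -> pt -> R.

Definition crd (x : pt) (j : 'I_N) : R := x ord0 j.

Definition iterD (m : nat) (s : seq 'I_m) (f : 'rV[R]_m -> R) : 'rV[R]_m -> R :=
  foldr (fun j g => fun x => derive g x (delta_mx 0 j)) f s.

Definition smooth (m : nat) (f : 'rV[R]_m -> R) : Prop :=
  forall (s : seq 'I_m) (x : 'rV[R]_m),
    {for x, continuous (iterD s f)} /\
    forall j : 'I_m, derivable (iterD s f) x (delta_mx 0 j).

Definition joint (S : symbol) : 'rV[R]_(N + N) -> R :=
  fun z => S (lsubmx z) (rsubmx z).

Definition homog_poly (k : nat) (S : symbol) : Prop :=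
  exists c : k.-tuple 'I_N -> pt -> R,
    forall x xi, S x xi = \sum_(s : k.-tuple 'I_N) c s x * \prod_(j <- s) crd xi j.

(* R^k = S^k_{delta + k/(n+1)} as a space of functions *)
Definition Rk (k : nat) (S : symbol) : Prop := smooth (joint S) /\ homog_poly k S.

Definition dx (j : 'I_N) (S : symbol) : symbol :=
  fun x xi => derive (fun y => S y xi) x (delta_mx 0 j).
Definition dxi (j : 'I_N) (S : symbol) : symbol :=
  fun x xi => derive (S x) xi (delta_mx 0 j).

Definition Es (S : symbol) : symbol := fun x xi =>
  \sum_(i < n) (crd x (pI i) * dx (pI i) S x xi + crd x (qI i) * dx (qI i) S x xi).

Definition Esxi (x xi : pt) : R :=
  \sum_(i < n) (crd x (pI i) * crd xi (pI i) + crd x (qI i) * crd xi (qI i)).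

Definition Dop (S : symbol) : symbol := fun x xi =>
  \sum_(i < n) (crd xi (qI i) * dx (pI i) S x xi - crd xi (pI i) * dx (qI i) S x xi)
  + crd xi (tI n) * Es S x xi - Esxi x xi * dx (tI n) S x xi.

Definition ialpha (S : symbol) : symbol := fun x xi =>
  2^-1 * (\sum_(i < n) (crd x (pI i) * dxi (qI i) S x xi
                          - crd x (qI i) * dxi (pI i) S x xi)
          - dxi (tI n) S x xi).

Definition Xop (delta : R) (k : nat) (S : symbol) : symbol := fun x xi =>
  Dop S x xi + (2 * (n + 1)%:R * delta + k%:R) * crd xi (tI n) * S x xi.

Definition rr (delta : R) (l k : nat) : R :=
  - (l%:R / 2) * (2 * (n + 1)%:R * delta + 2 * k%:R + l%:R - 1).

Definition Ffilt (k l : nat) (S : symbol) : Prop :=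
  Rk k S /\ iter l ialpha S = (fun _ _ => 0).

(* equality of classes in gr_{k,l}: for l >= 1, gr_{k,l} = F_{k,l}/F_{k,l-1};
   gr_{k,0} = {0}, so all elements are equal there. *)
Definition gr_eq (k l : nat) (u v : symbol) : Prop :=
  if l is l'.+1 then Ffilt k l' (fun x xi => u x xi - v x xi) else True.

Definition sscale (a : R) (S : symbol) : symbol := fun x xi => a * S x xi.

End Defs.

(* Main.v *)
From Pilot Require Import Defs.
From HB Require Import structures.
From mathcomp Require Import all_boot all_order all_algebra.
From mathcomp Require Import all_classical all_reals all_analysis.
From mathcomp Require Import ring.
Import Order.TTheory GRing.Theory Num.Theory.
Import numFieldNormedType.Exports.
Local Open Scope ring_scope.
Local Open Scope classical_set_scope.
Set Implicit Arguments. Unset Strict Implicit. Unset Printing Implicit Defensive.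

Section Gen.
Variable R : realType.

Lemma derive_ext (V W U : normedModType R) (f : V -> U) (g : W -> U) a v b w :
  (forall h : R, f (h *: v + a) = g (h *: w + b)) ->
  derive f a v = derive g b w /\ (derivable f a v <-> derivable g b w).
Proof.
move=> H.
have Hab : f a = g b by move: (H 0); rewrite !scale0r !add0r.
have E : (fun h : R => h^-1 *: ((f \o shift a) (h *: v) - f a)) =
         (fun h : R => h^-1 *: ((g \o shift b) (h *: w) - g b)).
  by apply/funext => h /=; rewrite /shift /= H Hab.
by rewrite /derive /derivable E.
Qed.

Lemma derive_crd m (j : 'I_m) (a v : 'rV[R]_m) :
  derive (fun x : 'rV[R]_m => x ord0 j) a v = v ord0 j /\
  derivable (fun x : 'rV[R]_m => x ord0 j) a v.
Proof.
have H : (fun h : R => h^-1 *: (((fun x : 'rV[R]_m => x ord0 j) \o shift a) (h *: v)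
           - a ord0 j)) @ 0^' --> v ord0 j.
  apply: cvg_near_cst; near=> h.
  have h0 : h != 0 by near: h; exact: nbhs_dnbhs_neq.
  rewrite /= /shift !mxE addrK /GRing.scale /= mulrA mulVf ?mul1r //.
split; first exact: cvg_lim H.
by apply/cvg_ex; exists (v ord0 j).
Unshelve. all: by end_near.
Qed.

End Gen.

Notation iD := Pilot.Defs.iterD.

Section Gen2.
Variable R : realType.

Lemma der_lin m (f g : 'rV[R]_m -> R) (a b : R) (x v : 'rV[R]_m) :
  derivable f x v -> derivable g x v ->
  derive (fun y : 'rV[R]_m => a * f y + b * g y) x v = a * derive f x v + b * derive g x v /\
  derivable (fun y : 'rV[R]_m => a * f y + b * g y) x v.
Proof.
move=> df dg.
have H : is_derive x v (a \*: f + b \*: g) (a *: derive f x v + b *: derive g x v).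
  apply: is_deriveD; apply: is_deriveZ; exact: derivableP.
split; [exact: (@derive_val _ _ _ _ _ _ _ H) | exact: (@ex_derive _ _ _ _ _ _ _ H)].
Qed.

Lemma der_crdM m (i : 'I_m) (f : 'rV[R]_m -> R) (x v : 'rV[R]_m) :
  derivable f x v ->
  derive (fun y : 'rV[R]_m => y ord0 i * f y) x v = x ord0 i * derive f x v + v ord0 i * f x /\
  derivable (fun y : 'rV[R]_m => y ord0 i * f y) x v.
Proof.
move=> df.
have [d1 d2] := derive_crd i x v.
have H : is_derive x v ((fun y : 'rV[R]_m => y ord0 i) * f)
   ((fun y : 'rV[R]_m => y ord0 i) x *: derive f x v + f x *: v ord0 i).
  apply: is_deriveM; [ | exact: derivableP].
  by apply: DeriveDef.
split; last exact: (@ex_derive _ _ _ _ _ _ _ H).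
rewrite (@derive_val _ _ _ _ _ _ _ H) /=.
by rewrite /GRing.scale /= [f x * _]mulrC.
Qed.

End Gen2.

Section Smooth.
Variable R : realType.
Variable m : nat.
Local Notation pt := 'rV[R]_m.
Local Notation e j := (delta_mx 0 j : pt).

Lemma iD_cons (s : seq 'I_m) j (f : pt -> R) :
  iD (j :: s) f = fun x => derive (iD s f) x (e j).
Proof. by []. Qed.

Lemma iD_cat (s t : seq 'I_m) (f : pt -> R) : iD (s ++ t) f = iD s (iD t f).
Proof. by rewrite /Defs.iterD foldr_cat. Qed.

Lemma cont_lin (f g : pt -> R) a b x :
  {for x, continuous f} -> {for x, continuous g} ->
  {for x, continuous (fun y => a * f y + b * g y)}.
Proof.
move=> cf cg.
exact: (cvgD (cvgMl_tmp cf) (cvgMl_tmp cg)).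
Qed.

Lemma cont_crdM i (f : pt -> R) x :
  {for x, continuous f} -> {for x, continuous (fun y : pt => y ord0 i * f y)}.
Proof.
move=> cf.
exact: (cvgM (@coord_continuous R 1 m ord0 i x) cf).
Qed.

Lemma iD_lin_gen (s : seq 'I_m) (F G : pt -> R) a b :
  (forall t, (size t < size s)%N -> forall x j, derivable (iD t F) x (e j)) ->
  (forall t, (size t < size s)%N -> forall x j, derivable (iD t G) x (e j)) ->
  iD s (fun y => a * F y + b * G y) = fun y => a * iD s F y + b * iD s G y.
Proof.
elim: s => [//|j s IH] dF dG.
rewrite !iD_cons IH; last 2 first.
- by move=> t Ht; apply: dF; rewrite /= ltnS ltnW.
- by move=> t Ht; apply: dG; rewrite /= ltnS ltnW.
apply/funext => x.
by have [-> _] := der_lin a b (dF s (ltnSn _) x j) (dG s (ltnSn _) x j).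
Qed.

Lemma smooth_lin (f g : pt -> R) a b :
  smooth f -> smooth g -> smooth (fun y => a * f y + b * g y).
Proof.
move=> sf sg s x.
rewrite iD_lin_gen; last 2 first.
- by move=> t _ y j; case: (sf t y) => _; apply.
- by move=> t _ y j; case: (sg t y) => _; apply.
split.
  by apply: cont_lin; [case: (sf s x) | case: (sg s x)].
move=> j; exact: (der_lin a b ((sf s x).2 j) ((sg s x).2 j)).2.
Qed.

Lemma smooth_crdM i (f : pt -> R) :
  smooth f -> smooth (fun y : pt => y ord0 i * f y).
Proof.
move=> sf s.
elim: {s}(size s) {-2}s (leqnn (size s)) f sf => [|k IH] s.
  rewrite leqn0 => /nilP -> f sf x /=; split.
    by apply: cont_crdM; case: (sf [::] x).
  by move=> j; exact: (der_crdM i ((sf [::] x).2 j)).2.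
case/lastP: s => [|s j] Hs f sf x.
  by apply: (IH [::]) => //.
rewrite -cats1 iD_cat.
have E : iD [:: j] (fun y : pt => y ord0 i * f y) =
  fun y => 1 * (y ord0 i * iD [:: j] f y) + ((e j) ord0 i) * f y.
  apply/funext => y; rewrite iD_cons /=.
  by have [-> _] := der_crdM i ((sf [::] y).2 j); rewrite mul1r.
have sg : smooth (iD [:: j] f).
  by move=> t z; rewrite -iD_cat; apply: sf.
have Hs' : (size s <= k)%N by move: Hs; rewrite size_rcons ltnS.
have IHg : forall t, (size t <= k)%N -> forall z,
  {for z, continuous (iD t (fun y : pt => y ord0 i * iD [:: j] f y))} /\
  forall j0, derivable (iD t (fun y : pt => y ord0 i * iD [:: j] f y)) z (e j0).
  by move=> t Ht z; apply: IH.
rewrite E iD_lin_gen; last 2 first.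
- by move=> t Ht y j0; case: (IHg t (leq_trans (ltnW Ht) Hs') y) => _; apply.
- by move=> t _ y j0; case: (sf t y) => _; apply.
split.
  by apply: cont_lin; [case: (IHg s Hs' x) | case: (sf s x)].
move=> j0; exact: (der_lin 1 ((e j) ord0 i) ((IHg s Hs' x).2 j0) ((sf s x).2 j0)).2.
Qed.

Lemma smooth_der j (f : pt -> R) : smooth f -> smooth (fun x => derive f x (e j)).
Proof.
move=> sf t z.
have -> : (fun x => derive f x (e j)) = iD [:: j] f by [].
by rewrite -iD_cat; apply: sf.
Qed.

End Smooth.

Section Gen3.
Variable R : realType.

Lemma smooth_cst0 m : smooth (fun _ : 'rV[R]_m => (0 : R)).
Proof.
have E : forall s, iD s (fun _ : 'rV[R]_m => (0 : R)) = fun _ => 0.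
  elim=> [//|j s IH]; rewrite iD_cons IH; apply: funext => x.
  exact: (derive_cst (0 : R)).
move=> s x; rewrite E; split; first exact: (@cst_continuous _ _ (0:R) x).
move=> j; exact: (derivable_cst (0 : R)).
Qed.

Lemma smooth_sum m p (F : 'I_p -> 'rV[R]_m -> R) :
  (forall i, smooth (F i)) -> smooth (fun y => \sum_(i < p) F i y).
Proof.
elim: p F => [|p IH] F sF.
  under [fun y => _]funext => y do rewrite big_ord0. exact: smooth_cst0.
have E : (fun y => \sum_(i < p.+1) F i y) =
   fun y => 1 * (\sum_(i < p) F (widen_ord (leqnSn p) i) y) + 1 * F ord_max y.
  by apply/funext => y; rewrite big_ord_recr /= !mul1r.
rewrite E; apply: smooth_lin; last exact: sF.
by apply: IH => i; exact: sF.
Qed.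

End Gen3.

Section Sym.
Variable R : realType.
Variable n : nat.
Local Notation N := (n + n + 1)%N.
Local Notation pt := 'rV[R]_N.
Local Notation sym := (symbol R n).
Local Notation e j := (delta_mx 0 j : pt).
Local Notation E2 j := (delta_mx 0 j : 'rV[R]_(N + N)).

Definition sm (S : sym) := smooth (joint S).

Lemma lsub_shift (h : R) j (z : 'rV[R]_(N + N)) :
  lsubmx (h *: E2 (lshift N j) + z) = h *: e j + lsubmx z /\
  rsubmx (h *: E2 (lshift N j) + z) = rsubmx z.
Proof.
split; apply/matrixP => a b; rewrite !mxE ?eq_lshift ?eq_rlshift //.
by rewrite andbF mulr0 add0r.
Qed.

Lemma rsub_shift (h : R) j (z : 'rV[R]_(N + N)) :
  lsubmx (h *: E2 (rshift N j) + z) = lsubmx z /\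
  rsubmx (h *: E2 (rshift N j) + z) = h *: e j + rsubmx z.
Proof.
split; apply/matrixP => a b; rewrite !mxE ?eq_rshift ?eq_lrshift //.
by rewrite andbF mulr0 add0r.
Qed.

Lemma joint_dx j (S : sym) z :
  derive (joint S) z (E2 (lshift N j)) = dx j S (lsubmx z) (rsubmx z) /\
  (derivable (joint S) z (E2 (lshift N j)) <->
   derivable (fun y => S y (rsubmx z)) (lsubmx z) (e j)).
Proof.
apply: derive_ext => h; rewrite /joint.
by have [-> ->] := lsub_shift h j z.
Qed.

Lemma joint_dxi j (S : sym) z :
  derive (joint S) z (E2 (rshift N j)) = dxi j S (lsubmx z) (rsubmx z) /\
  (derivable (joint S) z (E2 (rshift N j)) <->
   derivable (S (lsubmx z)) (rsubmx z) (e j)).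
Proof.
apply: derive_ext => h; rewrite /joint.
by have [-> ->] := rsub_shift h j z.
Qed.

Lemma sm_derx (S : sym) j x xi : sm S -> derivable (fun y => S y xi) x (e j).
Proof.
move=> sS; have [_ [H _]] := joint_dx j S (row_mx x xi).
by move: (H ((sS [::] (row_mx x xi)).2 (lshift N j))); rewrite row_mxKl row_mxKr.
Qed.

Lemma sm_derxi (S : sym) j x xi : sm S -> derivable (S x) xi (e j).
Proof.
move=> sS; have [_ [H _]] := joint_dxi j S (row_mx x xi).
by move: (H ((sS [::] (row_mx x xi)).2 (rshift N j))); rewrite row_mxKl row_mxKr.
Qed.

Lemma sm_dx j (S : sym) : sm S -> sm (dx j S).
Proof.
move=> sS; rewrite /sm.
have -> : joint (dx j S) = fun z => derive (joint S) z (E2 (lshift N j)).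
  by apply/funext => z; rewrite (joint_dx j S z).1.
exact: smooth_der.
Qed.

Lemma sm_dxi j (S : sym) : sm S -> sm (dxi j S).
Proof.
move=> sS; rewrite /sm.
have -> : joint (dxi j S) = fun z => derive (joint S) z (E2 (rshift N j)).
  by apply/funext => z; rewrite (joint_dxi j S z).1.
exact: smooth_der.
Qed.

Lemma sm_lin (S T : sym) a b : sm S -> sm T ->
  sm (fun x xi => a * S x xi + b * T x xi).
Proof. exact: smooth_lin. Qed.

Lemma sm_sum p (F : 'I_p -> sym) : (forall i, sm (F i)) ->
  sm (fun x xi => \sum_(i < p) F i x xi).
Proof. exact: smooth_sum. Qed.

Lemma sm_crdx j (S : sym) : sm S -> sm (fun x xi => crd x j * S x xi).
Proof.
move=> sS; rewrite /sm.
have -> : joint (fun x xi => crd x j * S x xi) =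
          fun z => z ord0 (lshift N j) * joint S z.
  by apply/funext => z; rewrite /joint /crd mxE.
exact: smooth_crdM.
Qed.

Lemma sm_crdxi j (S : sym) : sm S -> sm (fun x xi => crd xi j * S x xi).
Proof.
move=> sS; rewrite /sm.
have -> : joint (fun x xi => crd xi j * S x xi) =
          fun z => z ord0 (rshift N j) * joint S z.
  by apply/funext => z; rewrite /joint /crd mxE.
exact: smooth_crdM.
Qed.

Lemma sm_ext (S T : sym) : (forall x xi, S x xi = T x xi) -> sm S -> sm T.
Proof. by move=> H; have -> : S = T by apply/funext => x; apply/funext => xi; apply: H. Qed.

End Sym.

Section Gen4.
Variable R : realType.

Lemma der_sum m p (F : 'I_p -> 'rV[R]_m -> R) (x v : 'rV[R]_m) :
  (forall j, derivable (F j) x v) ->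
  derive (fun y : 'rV[R]_m => \sum_(j < p) F j y) x v = \sum_(j < p) derive (F j) x v /\
  derivable (fun y : 'rV[R]_m => \sum_(j < p) F j y) x v.
Proof.
move=> dF.
have -> : (fun y : 'rV[R]_m => \sum_(j < p) F j y) = \sum_(j < p) F j by rewrite fct_sumE.
split; [exact: derive_sum | exact: derivable_sum].
Qed.

Lemma delta_crd m (j i : 'I_m) : (delta_mx 0 j : 'rV[R]_m) ord0 i = (i == j)%:R.
Proof. by rewrite mxE. Qed.

Lemma sum_delta p (c : 'I_p) (F : 'I_p -> R) :
  \sum_(j < p) (j == c)%:R * F j = F c.
Proof.
rewrite (bigD1 c) //= eqxx mul1r big1 ?addr0 // => j /negbTE ->.
by rewrite mul0r.
Qed.

Lemma sum_delta' p (c : 'I_p) (F : 'I_p -> R) :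
  \sum_(j < p) (c == j)%:R * F j = F c.
Proof. by under eq_bigr => j _ do rewrite eq_sym; exact: sum_delta. Qed.

End Gen4.

Section Hmg.
Variable R : realType.
Variable n : nat.
Local Notation N := (n + n + 1)%N.
Local Notation pt := 'rV[R]_N.
Local Notation sym := (symbol R n).
Local Notation e j := (delta_mx 0 j : pt).

Fixpoint Hmg (k : nat) (S : sym) : Prop :=
  if k is k'.+1 then exists T : 'I_N -> sym, (forall j, Hmg k' (T j)) /\
     forall x xi, S x xi = \sum_(j < N) crd xi j * T j x xi
  else forall x xi, S x xi = S x 0.

Lemma symE (S T : sym) : (forall x xi, S x xi = T x xi) -> S = T.
Proof. by move=> H; apply/funext => x; apply/funext => xi; apply: H. Qed.

Lemma hom_ext k (S T : sym) : (forall x xi, S x xi = T x xi) -> Hmg k S -> Hmg k T.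
Proof. by move=> /symE ->. Qed.

Lemma hom_lin k (S T : sym) (a b : pt -> R) : Hmg k S -> Hmg k T ->
  Hmg k (fun x xi => a x * S x xi + b x * T x xi).
Proof.
elim: k S T => [|k IH] S T /=.
  by move=> HS HT x xi; rewrite HS HT.
move=> [U [HU EU]] [V [HV EV]].
exists (fun j x xi => a x * U j x xi + b x * V j x xi); split.
  by move=> j; apply: IH.
move=> x xi; rewrite EU EV !mulr_sumr -big_split /=.
by apply: eq_bigr => j _; rewrite mulrDr !mulrA ![_ * crd _ _]mulrC.
Qed.

Lemma hom0 k : Hmg k (fun _ _ => 0).
Proof.
elim: k => [//|k IH] /=.
exists (fun _ _ _ => 0); split => // x xi.
by rewrite big1 // => j _; rewrite mulr0.
Qed.

Lemma hom_sum k p (F : 'I_p -> sym) : (forall i, Hmg k (F i)) ->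
  Hmg k (fun x xi => \sum_(i < p) F i x xi).
Proof.
elim: p F => [|p IH] F HF.
  by apply: hom_ext (hom0 k) => x xi; rewrite big_ord0.
apply: (@hom_ext _ (fun x xi => 1 * \sum_(i < p) F (widen_ord (leqnSn p) i) x xi
                               + 1 * F ord_max x xi)).
  by move=> x xi; rewrite big_ord_recr /= !mul1r.
by apply: hom_lin; [apply: IH => i | ].
Qed.

Lemma hom_crdxi k j (S : sym) : Hmg k S -> Hmg k.+1 (fun x xi => crd xi j * S x xi).
Proof.
move=> HS; exists (fun j' x xi => (j' == j)%:R * S x xi); split.
  move=> j'; apply: (@hom_ext _ (fun x xi => (fun _ => (j' == j)%:R) x * S x xi
                                   + (fun _ => 0) x * S x xi)).
    by move=> x xi; rewrite mul0r addr0.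
  exact: hom_lin.
move=> x xi; rewrite (bigD1 j) //= eqxx mul1r big1 ?addr0 // => j' /negbTE ->.
by rewrite mul0r mulr0.
Qed.

Lemma hom_der k (S : sym) x xi j : Hmg k S -> derivable (S x) xi (e j).
Proof.
elim: k S x xi => [|k IH] S x xi /=.
  move=> HS; have -> : S x = cst (S x 0) by apply/funext => y; rewrite HS.
  exact: derivable_cst.
move=> [T [HT ET]].
have -> : S x = fun y => \sum_(j0 < N) crd y j0 * T j0 x y by apply/funext => y; rewrite ET.
apply: (der_sum _).2 => j0.
exact: (der_crdM _ (IH _ _ _ (HT j0))).2.
Qed.

Lemma hom0_dxi (S : sym) j x xi : Hmg 0 S -> dxi j S x xi = 0.
Proof.
move=> HS; rewrite /dxi.
have -> : S x = cst (S x 0) by apply/funext => y; rewrite HS.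
exact: derive_cst.
Qed.

Lemma homS_dxi k (S : sym) (T : 'I_N -> sym) i x xi :
  (forall j, Hmg k (T j)) -> (forall x xi, S x xi = \sum_(j < N) crd xi j * T j x xi) ->
  dxi i S x xi = T i x xi + \sum_(j < N) crd xi j * dxi i (T j) x xi.
Proof.
move=> HT ET; rewrite /dxi.
have -> : S x = fun y => \sum_(j0 < N) crd y j0 * T j0 x y by apply/funext => y; rewrite ET.
rewrite (der_sum _).1; last first.
  by move=> j0; exact: (der_crdM _ (hom_der (HT j0))).2.
under eq_bigr => j0 _ do rewrite (der_crdM _ (hom_der (HT j0))).1 delta_crd.
by rewrite big_split /= sum_delta addrC.
Qed.

Lemma hom_dxi k (S : sym) i : Hmg k S -> Hmg k.-1 (dxi i S).
Proof.
elim: k S => [|k IH] S /=.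
  by move=> HS x xi; rewrite !hom0_dxi.
move=> [T [HT ET]].
apply: (@hom_ext _ (fun x xi => (fun _ => 1) x * T i x xi + (fun _ => 1) x *
    \sum_(j < N) crd xi j * dxi i (T j) x xi)).
  by move=> x xi; rewrite !mul1r (homS_dxi i x xi HT ET).
apply: hom_lin => //.
case: k IH HT ET => [|k] IH HT ET.
  apply: (@hom_ext _ (fun _ _ => 0)); last exact: hom0.
  by move=> x xi; rewrite big1 // => j _; rewrite hom0_dxi ?mulr0.
exists (fun j => dxi i (T j)); split => //.
by move=> j; exact: (IH _ (HT j)).
Qed.

Lemma euler k (S : sym) x xi : Hmg k S ->
  \sum_(j < N) crd xi j * dxi j S x xi = k%:R * S x xi.
Proof.
elim: k S x xi => [|k IH] S x xi /=.
  by move=> HS; rewrite mul0r big1 // => j _; rewrite hom0_dxi ?mulr0.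
move=> [T [HT ET]].
under eq_bigr => j _ do rewrite (homS_dxi j x xi HT ET) mulrDr.
rewrite big_split /= -ET.
have E2 : \sum_(j < N) crd xi j * (\sum_(i < N) crd xi i * dxi j (T i) x xi) =
          k%:R * S x xi.
  under eq_bigr => j _ do rewrite mulr_sumr.
  rewrite exchange_big /= ET mulr_sumr; apply: eq_bigr => i _.
  rewrite mulrCA -(IH _ x xi (HT i)) mulr_sumr; apply: eq_bigr => j _.
  by rewrite mulrCA.
by rewrite E2 -[X in X + _]mul1r -mulrDl addrC -natr1.
Qed.

End Hmg.

Section Tup.
Variable R : realType.

Lemma sum_tupleS (T : finType) k (F : k.+1.-tuple T -> R) :
  \sum_(s : k.+1.-tuple T) F s = \sum_(j : T) \sum_(t : k.-tuple T) F (cons_tuple j t).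
Proof.
rewrite pair_big /=.
rewrite (reindex (fun p : T * k.-tuple T => (cons_tuple p.1 p.2))) /=; last first.
  exists (fun s : k.+1.-tuple T => (thead s, (behead_tuple s))) => [[j t] _|s _] /=.
    by rewrite theadE; congr pair; apply: val_inj.
  by apply: val_inj => /=; case: s => -[|a s] //=.
by apply: eq_bigr => -[j t].
Qed.

End Tup.

Section HomP.
Variable R : realType.
Variable n : nat.
Local Notation N := (n + n + 1)%N.
Local Notation pt := 'rV[R]_N.
Local Notation sym := (symbol R n).

Lemma homog_Hom k (S : sym) : homog_poly k S -> Hmg k S.
Proof.
elim: k S => [|k IH] S [c Hc] /=.
  move=> x xi; rewrite !Hc; apply: eq_bigr => t _.
  have -> : (t : seq _) = [::] by apply/nilP; rewrite /nilp size_tuple.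
  by rewrite !big_nil.
exists (fun j x xi => \sum_(t : k.-tuple 'I_N) c (cons_tuple j t) x * \prod_(i <- t) crd xi i).
split.
  move=> j; apply: IH; by exists (fun t => c (cons_tuple j t)).
move=> x xi; rewrite Hc sum_tupleS; apply: eq_bigr => j _.
rewrite mulr_sumr; apply: eq_bigr => t _.
by rewrite big_cons mulrCA.
Qed.

Lemma Hom_homog k (S : sym) : Hmg k S -> homog_poly k S.
Proof.
elim: k S => [|k IH] S /=.
  move=> HS; exists (fun _ x => S x 0) => x xi.
  under eq_bigr => t _ do (have -> : (t : seq _) = [::] by apply/nilP; rewrite /nilp size_tuple).
  rewrite big_const card_tuple expn0 /= big_nil mulr1 HS.
  by rewrite addr0.
move=> [T [HT ET]].
have /choice [c Hc] : forall j, exists c : k.-tuple 'I_N -> pt -> R,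
  forall x xi, T j x xi = \sum_(t : k.-tuple 'I_N) c t x * \prod_(i <- t) crd xi i.
  by move=> j; apply: IH.
exists (fun s x => c (thead s) (behead_tuple s) x) => x xi.
rewrite ET sum_tupleS; apply: eq_bigr => j _.
rewrite Hc mulr_sumr; apply: eq_bigr => t _.
rewrite big_cons theadE mulrCA.
by have -> : behead_tuple (cons_tuple j t) = t by apply: val_inj.
Qed.

End HomP.

Section Gen6.
Variable R : realType.

Lemma der_scl m (f : 'rV[R]_m -> R) a (x v : 'rV[R]_m) : derivable f x v ->
  derive (fun y : 'rV[R]_m => a * f y) x v = a * derive f x v /\
  derivable (fun y : 'rV[R]_m => a * f y) x v.
Proof.
move=> df; have [H1 H2] := der_lin a 0 df df.
have E : (fun y : 'rV[R]_m => a * f y + 0 * f y) = (fun y => a * f y).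
  by apply/funext => y; rewrite mul0r addr0.
by rewrite E in H1 H2; rewrite H1 mul0r addr0.
Qed.

Lemma der_scal_sum m p (a : 'I_p -> R) c (F : 'I_p -> 'rV[R]_m -> R) (x v : 'rV[R]_m) :
  (forall j, derivable (F j) x v) ->
  derive (fun y : 'rV[R]_m => c * \sum_(j < p) a j * F j y) x v =
    c * \sum_(j < p) a j * derive (F j) x v /\
  derivable (fun y : 'rV[R]_m => c * \sum_(j < p) a j * F j y) x v.
Proof.
move=> dF.
have dG : forall j, derivable (fun y => a j * F j y) x v by move=> j; exact: (der_scl _ (dF j)).2.
have [S1 S2] := der_sum dG.
have [T1 T2] := der_scl c S2.
split => //; rewrite T1 S1; congr (_ * _); apply: eq_bigr => j _.
exact: (der_scl _ (dF j)).1.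
Qed.

End Gen6.

Section Mixed.
Variable R : realType.
Variable n : nat.
Local Notation N := (n + n + 1)%N.
Local Notation pt := 'rV[R]_N.
Local Notation sym := (symbol R n).
Local Notation e j := (delta_mx 0 j : pt).

Definition SH k (S : sym) := sm S /\ Hmg k S.

Lemma sh_dxi k (S : sym) i : SH k S -> SH k.-1 (dxi i S).
Proof. by move=> [sS hS]; split; [exact: sm_dxi | exact: hom_dxi]. Qed.

Lemma euler_rep k (S : sym) x xi : Hmg k.+1 S ->
  S x xi = (k.+1%:R)^-1 * \sum_(j < N) crd xi j * dxi j S x xi.
Proof.
by move=> hS; rewrite (euler x xi hS) mulKf.
Qed.

Lemma dx_rep k (S : sym) m x xi : SH k.+1 S ->
  dx m S x xi = (k.+1%:R)^-1 * \sum_(j < N) crd xi j * dx m (dxi j S) x xi.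
Proof.
move=> [sS hS]; rewrite /dx.
have -> : (fun y => S y xi) =
  fun y => (k.+1%:R)^-1 * \sum_(j < N) crd xi j * (fun y => dxi j S y xi) y.
  by apply/funext => y; rewrite (euler_rep y xi hS).
rewrite (der_scal_sum _ _ _).1 //.
by move=> j; apply: sm_derx; apply: sm_dxi.
Qed.

Lemma dx_hom k (S : sym) m : SH k S -> Hmg k (dx m S).
Proof.
elim: k S => [|k IH] S.
  move=> [sS hS] x xi /=; rewrite /dx.
  by have -> : (fun y => S y xi) = (fun y => S y 0) by apply/funext => y; rewrite hS.
move=> HS; exists (fun j x xi => (k.+1%:R)^-1 * dx m (dxi j S) x xi); split.
  move=> j; apply: (@hom_ext _ _ _ (fun x xi => (fun _ => (k.+1%:R)^-1) x * dx m (dxi j S) x xi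
      + (fun _ => 0) x * dx m (dxi j S) x xi)).
    by move=> x xi; rewrite mul0r addr0.
  by apply: hom_lin; apply: IH; apply: (sh_dxi j HS).
move=> x xi; rewrite (dx_rep m x xi HS) mulr_sumr; apply: eq_bigr => j _.
by rewrite mulrCA.
Qed.

Lemma sh_dx k (S : sym) m : SH k S -> SH k (dx m S).
Proof. by move=> HS; split; [exact: sm_dx (HS.1) | exact: dx_hom]. Qed.

Lemma mixed k (S : sym) i m x xi : SH k S ->
  dxi i (dx m S) x xi = dx m (dxi i S) x xi.
Proof.
elim: k S x xi => [|k IH] S x xi.
  move=> HS; rewrite hom0_dxi; last exact: dx_hom.
  rewrite /dx.
  have -> : (fun y => dxi i S y xi) = cst 0.
    by apply/funext => y; rewrite hom0_dxi //; case: HS.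
  by rewrite derive_cst.
move=> HS; have [sS hS] := HS.
set c := (k.+1%:R : R)^-1.
pose U j := dxi j S.
have hU : forall j, SH k (U j) by move=> j; exact: (sh_dxi j HS).
have HW : forall j, Hmg k (fun x xi => c * dx m (U j) x xi).
  move=> j; apply: (@hom_ext _ _ _ (fun x xi => (fun _ => c) x * dx m (U j) x xi
      + (fun _ => 0) x * dx m (U j) x xi)).
    by move=> ? ?; rewrite mul0r addr0.
  by apply: hom_lin; apply: dx_hom.
have EW : forall x xi, dx m S x xi = \sum_(j < N) crd xi j * (c * dx m (U j) x xi).
  move=> x' xi'; rewrite (dx_rep m x' xi' HS) mulr_sumr; apply: eq_bigr => j _.
  by rewrite mulrCA.
have HV : forall j, Hmg k (fun x xi => c * U j x xi).
  move=> j; apply: (@hom_ext _ _ _ (fun x xi => (fun _ => c) x * U j x xi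
      + (fun _ => 0) x * U j x xi)).
    by move=> ? ?; rewrite mul0r addr0.
  by apply: hom_lin; case: (hU j).
have EV : forall x xi, S x xi = \sum_(j < N) crd xi j * (c * U j x xi).
  move=> x' xi'; rewrite (euler_rep x' xi' hS) mulr_sumr; apply: eq_bigr => j _.
  by rewrite mulrCA.
have DV : forall y xi', dxi i S y xi' =
   1 * (c * U i y xi') + 1 * (c * \sum_(j < N) crd xi' j * dxi i (U j) y xi').
  move=> y xi'; rewrite (homS_dxi i y xi' HV EV) !mul1r; congr (_ + _).
  rewrite mulr_sumr; apply: eq_bigr => j _; rewrite mulrCA; congr (_ * _).
  rewrite /dxi; exact: (der_scl _ (hom_der (hU j).2)).1.
have dUi : derivable (fun y => U i y xi) x (e m) by apply: sm_derx; case: (hU i).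
have dUj : forall j, derivable ((fun j y => dxi i (U j) y xi) j) x (e m).
  by move=> j; apply: sm_derx; apply: sm_dxi; case: (hU j).
have R1 : derive (fun y => c * U i y xi) x (e m) = c * derive (fun y => U i y xi) x (e m)
  := (der_scl c dUi).1.
have d1 : derivable (fun y => c * U i y xi) x (e m) := (der_scl c dUi).2.
have R2 : derive (fun y => c * \sum_(j < N) crd xi j * dxi i (U j) y xi) x (e m) =
   c * \sum_(j < N) crd xi j * derive (fun y => dxi i (U j) y xi) x (e m)
  := (der_scal_sum (fun j => crd xi j) c dUj).1.
have d2 : derivable (fun y => c * \sum_(j < N) crd xi j * dxi i (U j) y xi) x (e m)
  := (der_scal_sum (fun j => crd xi j) c dUj).2.
have ER : dx m (dxi i S) x xi =
    derive (fun y => 1 * (c * U i y xi) + 1 * (c * \sum_(j < N) crd xi j * dxi i (U j) y xi)) x (e m).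
  rewrite /dx; congr (derive _ x (e m)); apply/funext => y; exact: DV.
rewrite ER (der_lin 1 1 d1 d2).1 R1 R2 !mul1r.
rewrite (homS_dxi i x xi HW EW).
congr (_ + _).
rewrite mulr_sumr; apply: eq_bigr => j _; rewrite mulrCA; congr (_ * _).
have H1 : dxi i (fun x xi => c * dx m (U j) x xi) x xi = c * dxi i (dx m (U j)) x xi
  := (der_scl c (hom_der (dx_hom m (hU j)))).1.
rewrite H1 (IH _ _ _ (hU j)) /dx; reflexivity.
Qed.

End Mixed.

Section Gen7.
Variable R : realType.

Lemma derive_linear m (F : 'rV[R]_m -> R) (a v : 'rV[R]_m) :
  (forall (h : R) z, F (h *: v + z) = h * F v + F z) ->
  derive F a v = F v /\ derivable F a v.
Proof.
move=> HF.
have H : (fun h : R => h^-1 *: ((F \o shift a) (h *: v) - F a)) @ 0^' --> F v.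
  apply: cvg_near_cst; near=> h.
  have h0 : h != 0 by near: h; exact: nbhs_dnbhs_neq.
  rewrite /= /shift HF addrK /GRing.scale /= mulrA mulVf ?mul1r //.
split; first exact: cvg_lim H.
by apply/cvg_ex; exists (F v).
Unshelve. all: by end_near.
Qed.

Lemma der_mul m (f g : 'rV[R]_m -> R) (x v : 'rV[R]_m) :
  derivable f x v -> derivable g x v ->
  derive (fun y => f y * g y) x v = f x * derive g x v + g x * derive f x v /\
  derivable (fun y => f y * g y) x v.
Proof.
move=> df dg; split; [exact: (deriveM df dg) | exact: (derivableM df dg)].
Qed.

End Gen7.

Section Ops.
Variable R : realType.
Variable n : nat.
Local Notation N := (n + n + 1)%N.
Local Notation pt := 'rV[R]_N.
Local Notation sym := (symbol R n).
Local Notation e j := (delta_mx 0 j : pt).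
Local Notation q := (@qI n).
Local Notation p := (@pI n).
Local Notation t := (tI n).

Lemma eqqq i i' : (q i == q i') = (i == i').
Proof. by rewrite /qI !eq_lshift. Qed.
Lemma eqpp i i' : (p i == p i') = (i == i').
Proof. by rewrite /pI eq_lshift eq_rshift. Qed.
Lemma eqqp i i' : (q i == p i') = false.
Proof. by rewrite /qI /pI eq_lshift eq_lrshift. Qed.
Lemma eqpq i i' : (p i == q i') = false.
Proof. by rewrite /qI /pI eq_lshift eq_rlshift. Qed.
Lemma eqqt i : (q i == t) = false.
Proof. by rewrite /qI /tI eq_lrshift. Qed.
Lemma eqpt i : (p i == t) = false.
Proof. by rewrite /pI /tI eq_lrshift. Qed.
Lemma eqtq i : (t == q i) = false.
Proof. by rewrite /qI /tI eq_rlshift. Qed.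
Lemma eqtp i : (t == p i) = false.
Proof. by rewrite /pI /tI eq_rlshift. Qed.
Lemma eqtt : (t == t) = true.
Proof. exact: eqxx. Qed.

Definition eqI := (eqqq, eqpp, eqqp, eqpq, eqqt, eqpt, eqtq, eqtp, eqtt).

Lemma sumN (F : 'I_N -> R) :
  \sum_(j < N) F j = \sum_(i < n) F (q i) + \sum_(i < n) F (p i) + F t.
Proof. by rewrite big_split_ord /= big_split_ord /= big_ord1. Qed.

Definition case3 (T : Type) (fq fp : 'I_n -> T) (ft : T) (j : 'I_N) : T :=
  match fintype.split j with
  | inl j1 => match fintype.split j1 with inl i => fq i | inr i => fp i end
  | inr _ => ft
  end.

Lemma case3q T fq fp (ft : T) i : case3 fq fp ft (q i) = fq i.
Proof.
rewrite /case3 /qI.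
have -> : fintype.split (lshift 1 (lshift n i)) = inl (lshift n i) := unsplitK (inl _).
by have -> : fintype.split (lshift n i) = inl i := unsplitK (inl _).
Qed.
Lemma case3p T fq fp (ft : T) i : case3 fq fp ft (p i) = fp i.
Proof.
rewrite /case3 /pI.
have -> : fintype.split (lshift 1 (rshift n i)) = inl (rshift n i) := unsplitK (inl _).
by have -> : fintype.split (rshift n i) = inr i := unsplitK (inr _).
Qed.
Lemma case3t T fq fp (ft : T) : case3 fq fp ft t = ft.
Proof.
rewrite /case3 /tI.
by have -> : fintype.split (rshift (n + n) (ord0 : 'I_1)) = inr ord0 := unsplitK (inr _).
Qed.

Definition Aop (a : 'I_N -> pt -> R) (S : sym) : sym :=
  fun x xi => \sum_(j < N) a j x * dxi j S x xi.
Definition Bop (b : 'I_N -> sym) (S : sym) : sym :=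
  fun x xi => \sum_(m < N) b m x xi * dx m S x xi.

Lemma GC k (S : sym) a b x xi : SH k S ->
  (forall j m y, derivable (a j) y (e m)) ->
  (forall m y z j, derivable (b m y) z (e j)) ->
  Aop a (Bop b S) x xi = Bop b (Aop a S) x xi
   + \sum_(m < N) (\sum_(j < N) a j x * dxi j (b m) x xi) * dx m S x xi
   - \sum_(j < N) (\sum_(m < N) b m x xi * derive (a j) x (e m)) * dxi j S x xi.
Proof.
move=> HS da db.
have L : forall j, dxi j (Bop b S) x xi =
   \sum_(m < N) (b m x xi * dxi j (dx m S) x xi + dx m S x xi * dxi j (b m) x xi).
  move=> j; rewrite /dxi /Bop.
  have dF : forall m, derivable ((fun m z => b m x z * dx m S x z) m) xi (e j).
    by move=> m; exact: (der_mul (db m x xi j) (hom_der (dx_hom m HS))).2.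
  rewrite (der_sum dF).1; apply: eq_bigr => m _.
  exact: (der_mul (db m x xi j) (hom_der (dx_hom m HS))).1.
have Rr : forall m, dx m (Aop a S) x xi =
   \sum_(j < N) (a j x * dx m (dxi j S) x xi + dxi j S x xi * derive (a j) x (e m)).
  move=> m; rewrite /dx /Aop.
  have dF : forall j, derivable ((fun j y => a j y * dxi j S y xi) j) x (e m).
    by move=> j; exact: (der_mul (da j m x) (sm_derx (j:=m) (x:=x) (xi:=xi) (sm_dxi j HS.1))).2.
  rewrite (der_sum dF).1; apply: eq_bigr => j _.
  exact: (der_mul (da j m x) (sm_derx (j:=m) (x:=x) (xi:=xi) (sm_dxi j HS.1))).1.
have E0 : Aop a (Bop b S) x xi = \sum_(j < N) \sum_(m < N)
    a j x * (b m x xi * dxi j (dx m S) x xi + dx m S x xi * dxi j (b m) x xi).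
  by rewrite {1}/Aop; apply: eq_bigr => j _; rewrite L mulr_sumr.
have E1 : Bop b (Aop a S) x xi = \sum_(j < N) \sum_(m < N)
    b m x xi * (a j x * dx m (dxi j S) x xi + dxi j S x xi * derive (a j) x (e m)).
  rewrite {1}/Bop exchange_big /=; apply: eq_bigr => m _; by rewrite Rr mulr_sumr.
have E2 : \sum_(m < N) (\sum_(j < N) a j x * dxi j (b m) x xi) * dx m S x xi =
   \sum_(j < N) \sum_(m < N) a j x * dxi j (b m) x xi * dx m S x xi.
  by rewrite exchange_big /=; apply: eq_bigr => m _; rewrite mulr_suml.
have E3 : \sum_(j < N) (\sum_(m < N) b m x xi * derive (a j) x (e m)) * dxi j S x xi =
   \sum_(j < N) \sum_(m < N) b m x xi * derive (a j) x (e m) * dxi j S x xi.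
  by apply: eq_bigr => j _; rewrite mulr_suml.
rewrite E0 E1 E2 E3 -big_split -sumrB /=; apply: eq_bigr => j _.
rewrite -big_split -sumrB /=; apply: eq_bigr => m _.
rewrite (mixed j m x xi HS).
set A1 := a j x. set B1 := b m x xi. set M1 := dx m (dxi j S) x xi.
set D1 := dx m S x xi. set Db := dxi j (b m) x xi. set Ej := dxi j S x xi.
set Da := derive (a j) x (e m).
ring.
Qed.

End Ops.

Section Inst.
Variable R : realType.
Variable n : nat.
Local Notation N := (n + n + 1)%N.
Local Notation pt := 'rV[R]_N.
Local Notation sym := (symbol R n).
Local Notation e j := (delta_mx 0 j : pt).
Local Notation q := (@qI n).
Local Notation p := (@pI n).
Local Notation t := (tI n).

Lemma case3_ind (P : 'I_N -> Prop) :
  (forall i, P (q i)) -> (forall i, P (p i)) -> P t -> forall j, P j.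
Proof.
move=> Hq Hp Ht j.
rewrite -(splitK j); case: (fintype.split j) => [j1|k] /=.
  rewrite -(splitK j1); case: (fintype.split j1) => i /=; [exact: Hq | exact: Hp].
by rewrite (ord1 k); exact: Ht.
Qed.

Definition acoef : 'I_N -> pt -> R :=
  case3 (fun i y => 2^-1 * crd y (p i)) (fun i y => - 2^-1 * crd y (q i)) (fun _ => - 2^-1).

Definition bcoef : 'I_N -> sym :=
  case3 (fun i x xi => - crd xi (p i) + crd xi t * crd x (q i))
        (fun i x xi => crd xi (q i) + crd xi t * crd x (p i))
        (fun x xi => - Esxi x xi).

Lemma ialpha_A (S : sym) x xi : ialpha S x xi = Aop acoef S x xi.
Proof.
rewrite /Aop sumN /acoef case3t.
under eq_bigr => i _ do rewrite case3q.
rewrite [X in _ + X + _](eq_bigr (fun i => - 2^-1 * crd x (q i) * dxi (p i) S x xi));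
  last by move=> i _; rewrite case3p.
rewrite /ialpha -big_split /= mulrBr mulr_sumr mulNr; congr (_ - _).
by apply: eq_bigr => i _; ring.
Qed.

Lemma Dop_B (S : sym) x xi : Dop S x xi = Bop bcoef S x xi.
Proof.
rewrite /Bop sumN /bcoef case3t.
under eq_bigr => i _ do rewrite case3q.
rewrite [X in _ + X + _](eq_bigr (fun i => (crd xi (q i) + crd xi t * crd x (p i)) * dx (p i) S x xi));
  last by move=> i _; rewrite case3p.
rewrite /Dop /Es mulNr -big_split /= mulr_sumr -big_split /=; congr (_ + _).
apply: eq_bigr => i _.
set a1 := crd xi (q i). set a2 := crd xi (p i). set a3 := crd xi t.
set a4 := crd x (q i). set a5 := crd x (p i).
set d1 := dx (p i) S x xi. set d2 := dx (q i) S x xi.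
ring.
Qed.


Lemma crd_lin (h : R) (v z : pt) j : crd (h *: v + z) j = h * crd v j + crd z j.
Proof. by rewrite /crd !mxE. Qed.

Lemma crd_e j m : crd (e j) m = (m == j)%:R.
Proof. by rewrite /crd mxE. Qed.

Lemma acoef_der j (y : pt) m : derivable (acoef j) y (e m) /\
  derive (acoef j) y (e m) =
    case3 (fun i => 2^-1 * (p i == m)%:R) (fun i => - 2^-1 * (q i == m)%:R) (0 : R) j.
Proof.
move: j; apply: case3_ind => [i|i|]; rewrite /acoef ?case3q ?case3p ?case3t.
- have [d1 d2] := derive_crd (p i) y (e m).
  have D1 : derive (fun y : pt => 2^-1 * crd y (p i)) y (e m) =
     2^-1 * derive (fun x : pt => x ord0 (p i)) y (e m) := (der_scl _ d2).1.
  split; first exact: (der_scl _ d2).2.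
  rewrite D1 d1 mxE /=; reflexivity.
- have [d1 d2] := derive_crd (q i) y (e m).
  have D1 : derive (fun y : pt => - 2^-1 * crd y (q i)) y (e m) =
     - 2^-1 * derive (fun x : pt => x ord0 (q i)) y (e m) := (der_scl _ d2).1.
  split; first exact: (der_scl _ d2).2.
  rewrite D1 d1 mxE /=; reflexivity.
- split; first exact: (derivable_cst (- 2^-1 : R)).
  exact: (derive_cst (- 2^-1 : R)).
Qed.

Lemma Esxi_lin x (h : R) (v z : pt) : Esxi x (h *: v + z) = h * Esxi x v + Esxi x z.
Proof.
rewrite /Esxi mulr_sumr -big_split /=; apply: eq_bigr => i _.
rewrite !crd_lin; ring.
Qed.

Lemma bcoef_der m (y z : pt) j : derivable (bcoef m y) z (e j) /\ derive (bcoef m y) z (e j) = bcoef m y (e j).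
Proof.
have H : forall (h : R) (v w : pt), bcoef m y (h *: v + w) = h * bcoef m y v + bcoef m y w.
  move: m; apply: case3_ind => [i|i|] h v w; rewrite /bcoef ?case3q ?case3p ?case3t.
  - rewrite !crd_lin; ring.
  - rewrite !crd_lin; ring.
  - rewrite Esxi_lin; ring.
have [D1 D2] := derive_linear z (fun h w => H h (e j) w).
by split.
Qed.

Lemma T1_zero m x : \sum_(j < N) acoef j x * bcoef m x (e j) = 0.
Proof.
move: m; apply: case3_ind => [i'|i'|]; rewrite /bcoef ?case3q ?case3p ?case3t.
- rewrite sumN /acoef case3t !crd_e !eqI /=.
  under eq_bigr => i _ do rewrite case3q !crd_e !eqI /=.
  rewrite [X in _ + X + _](eq_bigr (fun i => (i' == i)%:R * (2^-1 * crd x (q i))));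
    last by move=> i _; rewrite case3p !crd_e !eqI /=; ring.
  rewrite big1; last by move=> i _; ring.
  rewrite sum_delta'. ring.
- rewrite sumN /acoef case3t !crd_e !eqI /=.
  rewrite [X in _ + X + _]big1; last by move=> i _; rewrite case3p !crd_e !eqI /=; ring.
  rewrite (eq_bigr (fun i => (i' == i)%:R * (2^-1 * crd x (p i))));
    last by move=> i _; rewrite case3q !crd_e !eqI /=; ring.
  rewrite sum_delta'. ring.
- rewrite /Esxi.
  under eq_bigr => j _ do rewrite mulrN mulr_sumr.
  rewrite sumrN exchange_big /= big1 ?oppr0 // => i _.
  rewrite (eq_bigr (fun j => (p i == j)%:R * (crd x (p i) * acoef j x)
                            + (q i == j)%:R * (crd x (q i) * acoef j x)));
    last by move=> j _; rewrite !crd_e; ring.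
  rewrite big_split /= !sum_delta' /acoef case3p case3q; ring.
Qed.

Lemma T2_eval (S : sym) x xi :
  \sum_(j < N) (\sum_(m < N) bcoef m x xi * derive (acoef j) x (e m)) * dxi j S x xi =
  \sum_(i < n) 2^-1 * (crd xi (q i) + crd xi t * crd x (p i)) * dxi (q i) S x xi +
  \sum_(i < n) - 2^-1 * (- crd xi (p i) + crd xi t * crd x (q i)) * dxi (p i) S x xi.
Proof.
have EQq : forall i, \sum_(m < N) bcoef m x xi * derive (acoef (q i)) x (e m) =
    2^-1 * (crd xi (q i) + crd xi t * crd x (p i)).
  move=> i; rewrite (eq_bigr (fun m => (p i == m)%:R * (2^-1 * bcoef m x xi)));
    last by move=> m _; rewrite (acoef_der (q i) x m).2 case3q; ring.
  by rewrite sum_delta' /bcoef case3p.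
have EQp : forall i, \sum_(m < N) bcoef m x xi * derive (acoef (p i)) x (e m) =
    - 2^-1 * (- crd xi (p i) + crd xi t * crd x (q i)).
  move=> i; rewrite (eq_bigr (fun m => (q i == m)%:R * (- 2^-1 * bcoef m x xi)));
    last by move=> m _; rewrite (acoef_der (p i) x m).2 case3p; ring.
  by rewrite sum_delta' /bcoef case3q.
have EQt : \sum_(m < N) bcoef m x xi * derive (acoef t) x (e m) = 0.
  by rewrite big1 // => m _; rewrite (acoef_der t x m).2 case3t mulr0.
rewrite sumN EQt mul0r addr0.
rewrite (eq_bigr (fun i => 2^-1 * (crd xi (q i) + crd xi t * crd x (p i)) * dxi (q i) S x xi));
  last by move=> i _; rewrite EQq.
rewrite [X in _ + X](eq_bigr (fun i => - 2^-1 * (- crd xi (p i) + crd xi t * crd x (q i)) * dxi (p i) S x xi)) //.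
by move=> i _; rewrite EQp.
Qed.

End Inst.

Section Comm.
Variable R : realType.
Variable n : nat.
Local Notation N := (n + n + 1)%N.
Local Notation pt := 'rV[R]_N.
Local Notation sym := (symbol R n).
Local Notation e j := (delta_mx 0 j : pt).
Local Notation q := (@qI n).
Local Notation p := (@pI n).
Local Notation t := (tI n).
Local Notation ac := (@acoef R n).
Local Notation bc := (@bcoef R n).

Definition Xg (w : R) (S : sym) : sym := fun x xi => Dop S x xi + w * crd xi t * S x xi.

Lemma Bop_der k (S : sym) x xi j : SH k S -> derivable (Bop bc S x) xi (e j).
Proof.
move=> HS; rewrite /Bop.
apply: (der_sum _).2 => m.
exact: (der_mul (bcoef_der m x xi j).1 (hom_der (dx_hom m HS))).2.
Qed.

Lemma dxi_Xg k (S : sym) w x xi j : SH k S ->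
  dxi j (Xg w S) x xi = dxi j (Bop bc S) x xi + w * (crd xi t * dxi j S x xi + (t == j)%:R * S x xi).
Proof.
move=> HS; rewrite /dxi.
have -> : Xg w S x = fun z => 1 * Bop bc S x z + w * (crd z t * S x z).
  by apply/funext => z; rewrite /Xg Dop_B mul1r mulrA.
have d1 := Bop_der (x:=x) (xi:=xi) (j:=j) HS.
have d2 := (der_crdM t (hom_der (x:=x) (xi:=xi) (j:=j) HS.2)).2.
rewrite (der_lin 1 w d1 d2).1 mul1r (der_crdM t (hom_der (x:=x) (xi:=xi) (j:=j) HS.2)).1.
by rewrite delta_crd.
Qed.

Lemma comm k (S : sym) w x xi : SH k S ->
  ialpha (Xg w S) x xi = Xg (w - 1) (ialpha S) x xi - 2^-1 * (w + k%:R) * S x xi.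
Proof.
move=> HS.
have IA : ialpha S = Aop ac S by apply: symE => y z; exact: ialpha_A.
rewrite ialpha_A {2}/Xg IA Dop_B /Aop.
under eq_bigr => j _ do rewrite (dxi_Xg w x xi j HS) mulrDr.
rewrite big_split /=.
have G := GC x xi HS (fun j m y => (acoef_der j y m).1) (fun m y z j => (bcoef_der m y z j).1).
rewrite /Aop in G; rewrite {}G.
have T1 : \sum_(m < N) (\sum_(j < N) ac j x * dxi j (bc m) x xi) * dx m S x xi = 0.
  rewrite big1 // => m _.
  rewrite (eq_bigr (fun j => ac j x * bc m x (e j))); last first.
    by move=> j _; rewrite /dxi (bcoef_der m x xi j).2.
  by rewrite T1_zero mul0r.
rewrite T1 addr0 T2_eval.
have EU := euler x xi HS.2.
rewrite sumN in EU.
set Q1 := \sum_(i < n) crd xi (q i) * dxi (q i) S x xi in EU.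
set P1 := \sum_(i < n) crd xi (p i) * dxi (p i) S x xi in EU.
have T2a : \sum_(i < n) 2^-1 * (crd xi (q i) + crd xi t * crd x (p i)) * dxi (q i) S x xi =
   2^-1 * Q1 + 2^-1 * crd xi t * \sum_(i < n) crd x (p i) * dxi (q i) S x xi.
  by rewrite /Q1 !mulr_sumr -big_split /=; apply: eq_bigr => i _; ring.
have T2b : \sum_(i < n) - 2^-1 * (- crd xi (p i) + crd xi t * crd x (q i)) * dxi (p i) S x xi =
   2^-1 * P1 - 2^-1 * crd xi t * \sum_(i < n) crd x (q i) * dxi (p i) S x xi.
  by rewrite /P1 !mulr_sumr -sumrB /=; apply: eq_bigr => i _; ring.
rewrite T2a T2b.
have AS : \sum_(j < N) ac j x * dxi j S x xi =
   2^-1 * (\sum_(i < n) crd x (p i) * dxi (q i) S x xi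
          - \sum_(i < n) crd x (q i) * dxi (p i) S x xi - dxi t S x xi).
  rewrite -/(Aop ac S x xi) -ialpha_A /ialpha; congr (_ * _).
  by rewrite sumrB.
have W : \sum_(j < N) ac j x * (w * (crd xi t * dxi j S x xi + (t == j)%:R * S x xi)) =
   w * crd xi t * \sum_(j < N) ac j x * dxi j S x xi + w * ac t x * S x xi.
  rewrite (eq_bigr (fun j => w * crd xi t * (ac j x * dxi j S x xi)
                             + (t == j)%:R * (w * ac j x * S x xi)));
    last by move=> j _; ring.
  by rewrite big_split /= -mulr_sumr sum_delta'.
rewrite W AS /acoef case3t.
rewrite (_ : 2^-1 * (w + k%:R) * S x xi = 2^-1 * w * S x xi + 2^-1 * (k%:R * S x xi)); last by ring.
rewrite -EU.
set Q2 := \sum_(i < n) crd x (p i) * dxi (q i) S x xi.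
set P2 := \sum_(i < n) crd x (q i) * dxi (p i) S x xi.
set BA := \sum_(m < N) bc m x xi * dx m (Aop ac S) x xi.
set Dt := dxi t S x xi. set S0 := S x xi. set xt := crd xi t.
ring.
Qed.

End Comm.

Section Fin.
Variable R : realType.
Variable n : nat.
Local Notation N := (n + n + 1)%N.
Local Notation pt := 'rV[R]_N.
Local Notation sym := (symbol R n).
Local Notation e j := (delta_mx 0 j : pt).
Local Notation q := (@qI n).
Local Notation p := (@pI n).
Local Notation t := (tI n).
Local Notation ac := (@acoef R n).
Local Notation bc := (@bcoef R n).

Definition Z : sym := fun _ _ => 0.

Lemma sh_ext k (S T : sym) : (forall x xi, S x xi = T x xi) -> SH k S -> SH k T.
Proof. by move=> /symE ->. Qed.

Lemma sh_lin k (S T : sym) a b : SH k S -> SH k T ->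
  SH k (fun x xi => a * S x xi + b * T x xi).
Proof.
move=> [sS hS] [sT hT]; split; first exact: sm_lin.
exact: (hom_lin (fun _ => a) (fun _ => b) hS hT).
Qed.

Lemma sh_zero k : SH k Z.
Proof. split; [exact: smooth_cst0 | exact: hom0]. Qed.

Lemma sh_sum k m (F : 'I_m -> sym) : (forall i, SH k (F i)) ->
  SH k (fun x xi => \sum_(i < m) F i x xi).
Proof.
move=> HF; split; first by apply: sm_sum => i; case: (HF i).
by apply: hom_sum => i; case: (HF i).
Qed.

Lemma sh_crdx k j (S : sym) : SH k S -> SH k (fun x xi => crd x j * S x xi).
Proof.
move=> [sS hS]; split; first exact: sm_crdx.
apply: (hom_ext (S := fun x xi => (fun y => crd y j) x * S x xi + (fun _ => 0) x * S x xi)).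
  by move=> x xi; rewrite mul0r addr0.
exact: (hom_lin (fun y => crd y j) (fun _ => 0) hS hS).
Qed.

Lemma sh_crdxi k j (S : sym) : SH k S -> SH k.+1 (fun x xi => crd xi j * S x xi).
Proof. by move=> [sS hS]; split; [exact: sm_crdxi | exact: hom_crdxi]. Qed.

Lemma sh_ialpha k (S : sym) : SH k S -> SH k.-1 (ialpha S).
Proof.
move=> HS.
have H1 := sh_sum (fun i => sh_lin 1 (-1) (sh_crdx (p i) (sh_dxi (q i) HS))
                                         (sh_crdx (q i) (sh_dxi (p i) HS))).
apply: sh_ext (sh_lin (2^-1) (- 2^-1) H1 (sh_dxi t HS)) => x xi.
rewrite /ialpha.
rewrite [in RHS](eq_bigr (fun i => 1 * (crd x (p i) * dxi (q i) S x xi) + -1 * (crd x (q i) * dxi (p i) S x xi)));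
  last by move=> i _; ring.
ring.
Qed.

Lemma sh_Xg k (S : sym) w : SH k S -> SH k.+1 (Xg w S).
Proof.
move=> HS.
have HA := sh_sum (fun i => sh_lin 1 (-1) (sh_crdxi (q i) (sh_dx (p i) HS))
                                         (sh_crdxi (p i) (sh_dx (q i) HS))).
have HE : SH k (Es S).
  have := sh_sum (fun i => sh_lin 1 1 (sh_crdx (p i) (sh_dx (p i) HS))
                                       (sh_crdx (q i) (sh_dx (q i) HS))).
  by apply: sh_ext => x xi; rewrite /Es; apply: eq_bigr => i _; ring.
have HB := sh_crdxi t HE.
have HC := sh_sum (fun i => sh_lin 1 1 (sh_crdx (p i) (sh_crdxi (p i) (sh_dx t HS)))
                                       (sh_crdx (q i) (sh_crdxi (q i) (sh_dx t HS)))).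
have HD := sh_crdxi t HS.
apply: sh_ext (sh_lin 1 w (sh_lin 1 (-1) (sh_lin 1 1 HA HB) HC) HD) => x xi.
rewrite /Xg /Dop /Esxi.
rewrite [in RHS](eq_bigr (fun i => 1 * (crd xi (q i) * dx (p i) S x xi) + -1 * (crd xi (p i) * dx (q i) S x xi)));
  last by move=> i _; ring.
rewrite [in RHS]mulr_suml.
rewrite [X in _ = _ - X + _](eq_bigr (fun i => 1 * (crd x (p i) * (crd xi (p i) * dx t S x xi)) +
                                        1 * (crd x (q i) * (crd xi (q i) * dx t S x xi))));
  last by move=> i _; ring.
ring.
Qed.

Lemma dxi_lin k1 k2 (S T : sym) a b j x xi : Hmg k1 S -> Hmg k2 T ->
  dxi j (fun x xi => a * S x xi + b * T x xi) x xi = a * dxi j S x xi + b * dxi j T x xi.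
Proof.
move=> hS hT; rewrite /dxi.
exact: (der_lin a b (hom_der (x:=x) (xi:=xi) (j:=j) hS) (hom_der (x:=x) (xi:=xi) (j:=j) hT)).1.
Qed.

Lemma dx_lin (S T : sym) a b j x xi : sm S -> sm T ->
  dx j (fun x xi => a * S x xi + b * T x xi) x xi = a * dx j S x xi + b * dx j T x xi.
Proof.
move=> sS sT; rewrite /dx.
exact: (der_lin a b (sm_derx (j:=j) (x:=x) (xi:=xi) sS) (sm_derx (j:=j) (x:=x) (xi:=xi) sT)).1.
Qed.

Lemma ialpha_lin k1 k2 (S T : sym) a b x xi : SH k1 S -> SH k2 T ->
  ialpha (fun x xi => a * S x xi + b * T x xi) x xi = a * ialpha S x xi + b * ialpha T x xi.
Proof.
move=> HS HT; rewrite !ialpha_A /Aop.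
under eq_bigr => j _ do rewrite (dxi_lin a b j x xi HS.2 HT.2).
rewrite !mulr_sumr -big_split /=; apply: eq_bigr => j _; ring.
Qed.

Lemma Xg_lin (S T : sym) w a b x xi : sm S -> sm T ->
  Xg w (fun x xi => a * S x xi + b * T x xi) x xi = a * Xg w S x xi + b * Xg w T x xi.
Proof.
move=> sS sT; rewrite /Xg !Dop_B /Bop.
under eq_bigr => j _ do rewrite (dx_lin a b j x xi sS sT).
have -> : \sum_(j < N) bc j x xi * (a * dx j S x xi + b * dx j T x xi) =
   a * \sum_(j < N) bc j x xi * dx j S x xi + b * \sum_(j < N) bc j x xi * dx j T x xi.
  by rewrite !mulr_sumr -big_split /=; apply: eq_bigr => j _; ring.
ring.
Qed.

Lemma ialpha0 x xi : ialpha Z x xi = 0.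
Proof.
rewrite ialpha_A /Aop big1 // => j _.
rewrite /dxi /Z (_ : (fun _ => 0) = cst (0 : R)) // derive_cst; ring.
Qed.

Lemma Xg0 w x xi : Xg w Z x xi = 0.
Proof.
rewrite /Xg Dop_B /Bop big1 ?add0r; first by rewrite /Z; ring.
move=> j _; rewrite /dx /Z (_ : (fun _ => 0) = cst (0 : R)) // derive_cst; ring.
Qed.

End Fin.

Section Iter.
Variable R : realType.
Variable n : nat.
Variable delta : R.
Local Notation N := (n + n + 1)%N.
Local Notation sym := (symbol R n).
Local Notation Zs := (@Z R n).
Local Notation ia := (@ialpha R n).

Lemma sh_iter k (S : sym) m : SH k S -> SH (k - m) (iter m ia S).
Proof.
move=> HS; elim: m => [|m IH]; first by rewrite subn0.
by rewrite iterS subnS; apply: sh_ialpha.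
Qed.

Lemma iter_lin k (S T : sym) a b m x xi : SH k S -> SH k T ->
  iter m ia (fun x xi => a * S x xi + b * T x xi) x xi =
  a * iter m ia S x xi + b * iter m ia T x xi.
Proof.
move=> HS HT; elim: m x xi => [//|m IH] x xi.
rewrite !iterS.
have -> : iter m ia (fun x xi => a * S x xi + b * T x xi) =
          (fun x xi => a * iter m ia S x xi + b * iter m ia T x xi).
  by apply: symE => y z; apply: IH.
exact: (ialpha_lin a b x xi (sh_iter m HS) (sh_iter m HT)).
Qed.

Lemma iterZ m : iter m ia Zs = Zs.
Proof.
elim: m => [//|m IH]; rewrite iterS IH.
by apply: symE => x xi; rewrite ialpha0.
Qed.

Definition cc (k : nat) : R := 2 * (n + 1)%:R * delta + k%:R.
Definition lam (k : nat) : R := - 2^-1 * (cc k + k%:R).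
Definition Lam (k m : nat) : R := \sum_(j < m.+1) lam (k - j).

Lemma Xop_Xg k (S : sym) : Xop delta k S = Xg (cc k) S.
Proof. by []. Qed.

Lemma comm_X k (S : sym) x xi : SH k S ->
  ia (Xop delta k S) x xi = Xop delta k.-1 (ia S) x xi + lam k * S x xi.
Proof.
move=> HS; rewrite Xop_Xg (comm _ x xi HS) /lam.
case: k HS => [|k] HS.
  have H0 : forall j y z, dxi j S y z = 0 by move=> j y z; exact: hom0_dxi HS.2.
  have -> : ia S = Zs.
    apply: symE => y z; rewrite /ialpha H0 big1 /Z; first ring.
    by move=> i _; rewrite !H0; ring.
  rewrite Xg0 Xop_Xg Xg0; ring.
have -> : cc k.+1 - 1 = cc k by rewrite /cc -addn1 natrD; ring.
rewrite Xop_Xg /=; ring.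
Qed.


Lemma iter_X k (S : sym) m x xi : SH k S ->
  iter m.+1 ia (Xop delta k S) x xi =
  Xop delta (k - m.+1) (iter m.+1 ia S) x xi + Lam k m * iter m ia S x xi.
Proof.
move=> HS; elim: m x xi => [|m IH] x xi.
  by rewrite /= comm_X // subn1 /Lam big_ord1 subn0.
rewrite iterS.
have -> : iter m.+1 ia (Xop delta k S) = (fun x xi =>
    1 * Xop delta (k - m.+1) (iter m.+1 ia S) x xi + Lam k m * iter m ia S x xi).
  by apply: symE => y z; rewrite IH mul1r.
have HT := sh_iter m.+1 HS.
have HT' := sh_iter m HS.
rewrite (ialpha_lin 1 (Lam k m) x xi (sh_Xg (cc (k - m.+1)) HT) HT').
rewrite (comm_X x xi HT) -!iterS -subnS.
have -> : Lam k m.+1 = Lam k m + lam (k - m.+1) by rewrite /Lam big_ord_recr.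
ring.
Qed.

Lemma Lam_rr K m : (m <= K)%N -> Lam K m = rr n delta m.+1 (K - m).
Proof.
elim: m => [|m IH] Hm.
  rewrite /Lam big_ord1 subn0 /lam /cc /rr; ring.
rewrite /Lam big_ord_recr /= -/(Lam K m) IH ?(ltnW Hm) //.
rewrite -(subnSK Hm).
set a := (K - m.+1)%N.
rewrite /lam /cc /rr.
rewrite -[(a.+1)%:R]natr1 -[(m.+2)%:R]natr1 -[(m.+1)%:R]natr1.
ring.
Qed.

End Iter.

Section Final.
Variable R : realType.
Variable n : nat.
Variable delta : R.
Local Notation N := (n + n + 1)%N.
Local Notation sym := (symbol R n).
Local Notation Zs := (@Z R n).
Local Notation ia := (@ialpha R n).
Local Notation X k := (Xop delta k).

Lemma Ffilt_SH k l (S : sym) : Ffilt k l S -> SH k S.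
Proof. by move=> [[H1 H2] _]; split; [exact: H1 | exact: homog_Hom]. Qed.

Lemma Ffilt_it k l (S : sym) x xi : Ffilt k l S -> iter l ia S x xi = 0.
Proof. by move=> [_ ->]. Qed.

Lemma FfiltP k l (S : sym) : SH k S -> (forall x xi, iter l ia S x xi = 0) -> Ffilt k l S.
Proof.
move=> [H1 H2] H; split; first by split; [exact: H1 | exact: Hom_homog].
by apply: symE.
Qed.

Lemma Ffilt_ext k l (S T : sym) : (forall x xi, S x xi = T x xi) -> Ffilt k l S -> Ffilt k l T.
Proof. by move=> /symE ->. Qed.

Lemma Ffilt_scale k l (S : sym) c : Ffilt k l S -> Ffilt k l (fun x xi => c * S x xi).
Proof.
move=> HF; have HS := Ffilt_SH HF.
have E : (fun x xi => c * S x xi) = (fun x xi => c * S x xi + 0 * S x xi).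
  by apply: symE => x xi; ring.
rewrite E; apply: FfiltP; first exact: sh_lin.
by move=> x xi; rewrite (iter_lin _ _ _ _ _ HS HS) (Ffilt_it _ _ HF); ring.
Qed.

Lemma subE (S T : sym) : (fun x xi => S x xi - T x xi) = (fun x xi => 1 * S x xi + -1 * T x xi).
Proof. by apply: symE => x xi; ring. Qed.

Lemma iterZ' k l (S : sym) m x xi : Ffilt k l S -> (l <= m)%N -> iter m ia S x xi = 0.
Proof.
move=> HF /subnK <-; rewrite iterD.
have -> : iter l ia S = Zs by case: HF.
by rewrite iterZ.
Qed.

Lemma XZ k x xi : X k Zs x xi = 0.
Proof. by rewrite Xop_Xg Xg0. Qed.

Lemma XZ' k (S : sym) x xi : S = Zs -> X k S x xi = 0.
Proof. by move=> ->; exact: XZ. Qed.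


Lemma partA K L (u : sym) : Ffilt K.+1 L.+1 u -> Ffilt K L (ia u).
Proof.
move=> HF; apply: FfiltP; first exact: (sh_ialpha (Ffilt_SH HF)).
by move=> x xi; rewrite -iterSr (Ffilt_it _ _ HF).
Qed.

Lemma ia_sub k1 k2 (u v : sym) x xi : SH k1 u -> SH k2 v ->
  ia (fun x xi => u x xi - v x xi) x xi = ia u x xi - ia v x xi.
Proof. by move=> Hu Hv; rewrite subE (ialpha_lin 1 (-1) x xi Hu Hv); ring. Qed.

Lemma X_sub k (u v : sym) x xi : SH k u -> SH k v ->
  X k (fun x xi => u x xi - v x xi) x xi = X k u x xi - X k v x xi.
Proof.
by move=> Hu Hv; rewrite subE !Xop_Xg (Xg_lin _ 1 (-1) x xi Hu.1 Hv.1); ring.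
Qed.

Lemma partB K L (u v : sym) : Ffilt K.+1 L.+1 u -> Ffilt K.+1 L.+1 v ->
  gr_eq K.+1 L.+1 u v -> gr_eq K L (ia u) (ia v).
Proof.
move=> Hu Hv; case: L Hu Hv => [//|L] Hu Hv /= HF.
apply: Ffilt_ext (partA HF) => x xi.
exact: (ia_sub x xi (Ffilt_SH Hu) (Ffilt_SH Hv)).
Qed.

Lemma partC K L (u : sym) : Ffilt K L u -> Ffilt K.+1 L.+1 (X K u).
Proof.
move=> HF; have HS := Ffilt_SH HF.
apply: FfiltP; first exact: (sh_Xg _ HS).
move=> x xi; rewrite (iter_X delta L x xi HS) (Ffilt_it _ _ HF) mulr0 addr0.
apply: XZ'; apply: symE => y z; exact: (iterZ' y z HF (leqnSn L)).
Qed.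

Lemma partD K L (u v : sym) : Ffilt K L u -> Ffilt K L v ->
  gr_eq K L u v -> gr_eq K.+1 L.+1 (X K u) (X K v).
Proof.
move=> Hu Hv; case: L Hu Hv => [|L] Hu Hv /= HF.
  apply: FfiltP.
    apply: sh_ext (sh_lin 1 (-1) (sh_Xg (@cc R n delta K) (Ffilt_SH Hu)) (sh_Xg (@cc R n delta K) (Ffilt_SH Hv))) => x xi.
    rewrite !Xop_Xg; ring.
  move=> x xi /=.
  have -> : u = Zs by case: Hu.
  have -> : v = Zs by case: Hv.
  by rewrite !XZ subrr.
apply: Ffilt_ext (partC HF) => x xi.
exact: (X_sub x xi (Ffilt_SH Hu) (Ffilt_SH Hv)).
Qed.


Lemma partE K L (u : sym) : (L <= K.+1)%N -> Ffilt K.+1 L.+1 u ->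
  gr_eq K.+1 L.+1 (X K (ia u)) (sscale (rr n delta L (K.+2 - L.+1)) u).
Proof.
move=> HL HF.
have Hu := Ffilt_SH HF.
have Hv := sh_ialpha Hu.
have HXv : SH K.+1 (X K (ia u)) := sh_Xg (@cc R n delta K) Hv.
rewrite /gr_eq /sscale.
have -> : (fun x xi => X K (ia u) x xi - rr n delta L (K.+2 - L.+1) * u x xi) =
   (fun x xi => 1 * X K (ia u) x xi + (- rr n delta L (K.+2 - L.+1)) * u x xi)
  by apply: symE => y z; ring.
apply: FfiltP; first exact: sh_lin.
move=> x xi; rewrite (iter_lin _ _ _ _ _ HXv Hu).
case: L HL HF => [|L] HL HF.
  rewrite /= XZ'; last by apply: symE => y z; exact: (Ffilt_it y z HF).
  rewrite /rr; ring.
rewrite (iter_X delta L x xi Hv) -!iterSr.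
rewrite XZ'; last by apply: symE => y z; exact: (Ffilt_it y z HF).
rewrite /= (Lam_rr n delta (K:=K) (m:=L)) //.
rewrite !subSS; ring.
Qed.

Lemma partF K L (u : sym) : (L <= K.+1)%N -> Ffilt K L u ->
  gr_eq K L (ia (X K u)) (sscale (rr n delta L (K.+2 - L.+1)) u).
Proof.
case: L => [//|L] HL HF.
have Hu := Ffilt_SH HF.
have HXu : SH K.+1 (X K u) := sh_Xg (@cc R n delta K) Hu.
have Hv : SH K (ia (X K u)) := sh_ialpha HXu.
rewrite /gr_eq /sscale.
have -> : (fun x xi => ia (X K u) x xi - rr n delta L.+1 (K.+2 - L.+2) * u x xi) =
   (fun x xi => 1 * ia (X K u) x xi + (- rr n delta L.+1 (K.+2 - L.+2)) * u x xi)
  by apply: symE => y z; ring.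
apply: FfiltP; first exact: sh_lin.
move=> x xi; rewrite (iter_lin _ _ _ _ _ Hv Hu) -iterSr.
rewrite (iter_X delta L x xi Hu).
rewrite XZ'; last by apply: symE => y z; exact: (Ffilt_it y z HF).
rewrite (Lam_rr n delta (m:=L)) //.
rewrite !subSS; ring.
Qed.

Lemma partG1 K L (u : sym) : (L <= K.+1)%N -> rr n delta L (K.+2 - L.+1) != 0 ->
  Ffilt K.+1 L.+1 u ->
  gr_eq K.+1 L.+1 (sscale (rr n delta L (K.+2 - L.+1))^-1 (X K (ia u))) u.
Proof.
move=> HL Hr HF; have := partE HL HF; rewrite /gr_eq => /(Ffilt_scale (rr n delta L (K.+2 - L.+1))^-1).
apply: Ffilt_ext => x xi; rewrite /sscale mulrBr mulKf //.
Qed.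

Lemma partG2 K L (u : sym) : (L <= K.+1)%N -> rr n delta L (K.+2 - L.+1) != 0 ->
  Ffilt K L u ->
  gr_eq K L (ia (sscale (rr n delta L (K.+2 - L.+1))^-1 (X K u))) u.
Proof.
move=> HL Hr HF; have := partF HL HF.
case: L HL Hr HF => [//|L] HL Hr HF.
rewrite /gr_eq => /(Ffilt_scale (rr n delta L.+1 (K.+2 - L.+2))^-1).
have HXu : SH K.+1 (X K u) := sh_Xg (@cc R n delta K) (Ffilt_SH HF).
apply: Ffilt_ext => x xi.
have -> : sscale (rr n delta L.+1 (K.+2 - L.+2))^-1 (X K u) =
   (fun x xi => (rr n delta L.+1 (K.+2 - L.+2))^-1 * X K u x xi + 0 * X K u x xi).
  by apply: symE => y z; rewrite /sscale; ring.
rewrite (ialpha_lin _ _ x xi HXu HXu) /sscale.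
rewrite mulrBr mulKf //; ring.
Qed.

End Final.

Local Close Scope classical_set_scope.

Theorem proposition6p2 (R : realType) (n : nat) (delta : R) (k l : nat) :
  (1 <= n)%N -> (1 <= k)%N -> (1 <= l <= k.+1)%N ->
  let r := rr n delta l.-1 (k.+1 - l) in
  (forall u : symbol R n, Ffilt k l u -> Ffilt k.-1 l.-1 (ialpha u)) /\
  (forall u v : symbol R n, Ffilt k l u -> Ffilt k l v -> gr_eq k l u v ->
      gr_eq k.-1 l.-1 (ialpha u) (ialpha v)) /\
  (forall u : symbol R n, Ffilt k.-1 l.-1 u -> Ffilt k l (Xop delta k.-1 u)) /\
  (forall u v : symbol R n, Ffilt k.-1 l.-1 u -> Ffilt k.-1 l.-1 v ->
      gr_eq k.-1 l.-1 u v -> gr_eq k l (Xop delta k.-1 u) (Xop delta k.-1 v)) /\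
  (forall u : symbol R n, Ffilt k l u ->
      gr_eq k l (Xop delta k.-1 (ialpha u)) (sscale r u)) /\
  (forall u : symbol R n, Ffilt k.-1 l.-1 u ->
      gr_eq k.-1 l.-1 (ialpha (Xop delta k.-1 u)) (sscale r u)) /\
  (r != 0 ->
    (forall u : symbol R n, Ffilt k l u ->
       gr_eq k l (sscale r^-1 (Xop delta k.-1 (ialpha u))) u) /\
    (forall u : symbol R n, Ffilt k.-1 l.-1 u ->
       gr_eq k.-1 l.-1 (ialpha (sscale r^-1 (Xop delta k.-1 u))) u)).
Proof.
move=> _ Hk /andP [Hl1 Hl2].
case: k Hk Hl2 => [//|K] _ Hl2.
case: l Hl1 Hl2 => [//|L] _ Hl2.
have HL : (L <= K.+1)%N by [].
move=> r; rewrite /r /=.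
split; first by move=> u; exact: partA.
split; first by move=> u v; exact: partB.
split; first by move=> u; exact: partC.
split; first by move=> u v; exact: partD.
split; first by move=> u; exact: partE.
split; first by move=> u; exact: partF.
move=> Hr; split; first by move=> u; exact: partG1.
by move=> u; exact: partG2.
Qed.
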